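(* Let $(X,\Gamma)$ be a $(\mu,\nu)$-path system space. For every $\delta\ge0$ and $\varepsilon\ge0$ there exists $\theta\ge0$ with the following property. Let $A,B\subseteq X$ be subsets with $\delta$-constricting maps $\pi_A\colon X\to A$ and $\pi_B\colon X\to B$, and let $Y\subseteq X$ be non-empty, such that $\operatorname{diam}_A(B)\le\varepsilon$, $\operatorname{diam}_B(A)\le\varepsilon$, $\operatorname{diam}_A(Y)\le\varepsilon$, $\operatorname{diam}_B(Y)\le\varepsilon$, $d(A,Y)\le\varepsilon$ and $d(B,Y)\le\varepsilon$. Then for every $x\in X$, $\min\{d_A(x,Y),d_B(x,Y)\}\le\theta$.
   Context: A path is a rectifiable continuous map $\alpha\colon[a,b]\to X$ parametrised by arc length; it is a $(\kappa,\lambda)$-quasi-geodesic if $d(\alpha(t),\alpha(t'))\le|t-t'|\le\kappa d(\alpha(t),\alpha(t'))+\lambda$. A $(\mu,\nu)$-path system space $(X,\Gamma)$ is a geodesic metric space $X$ with a collection $\Gamma$ of paths closed under subpaths, such that any two points are joined by an element of $\Gamma$ and every element is a $(\mu,\nu)$-quasi-geodesic. A map $\pi_A\colon X\to A$ onto a subset $A$ is $\delta$-constricting if (CS1) $d(x,\pi_A(x))\le\delta$ for $x\in A$, and (CS2) for all $x,y\in X$ and $\gamma\in\Gamma$ joining $x$ to $y$, if $d(\pi_A(x),\pi_A(y))>\delta$ then $\gamma$ meets $B_X(\pi_A(x),\delta)$ and $B_X(\pi_A(y),\delta)$. Notation: $d_A(x,y)=d(\pi_A(x),\pi_A(y))$,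 $\operatorname{diam}_A(Y)=\operatorname{diam}(\pi_A(Y))$, $d_A(x,Y)=d(\pi_A(x),\pi_A(Y))$, $d_A(Y,Z)=d(\pi_A(Y),\pi_A(Z))$, where $d$ between sets is the infimum of distances. *)

(* Defs.v *)
From Stdlib Require Import Reals List.
From Coquelicot Require Import Coquelicot.
Open Scope R_scope.

Definition is_metric {X : Type} (d : X -> X -> R) : Prop :=
  (forall x y, 0 <= d x y) /\
  (forall x y, d x y = 0 <-> x = y) /\
  (forall x y, d x y = d y x) /\
  (forall x y z, d x z <= d x y + d y z).

Definition is_geodesic {X : Type} (d : X -> X -> R) : Prop :=
  forall x y, exists g : R -> X,
    g 0 = x /\ g (d x y) = y /\
    forall s t, 0 <= s <= d x y -> 0 <= t <= d x y -> d (g s) (g t) = Rabs (s - t).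

(* A (candidate) path: a map defined on [p_a, p_b] (values outside are
   irrelevant). *)
Record path (X : Type) := mkPath { p_a : R; p_b : R; p_f : R -> X }.
Arguments mkPath {X} _ _ _.
Arguments p_a {X} _.
Arguments p_b {X} _.
Arguments p_f {X} _.

Fixpoint chain_sum {X : Type} (d : X -> X -> R) (f : R -> X) (t0 : R) (l : list R) : R :=
  match l with
  | nil => 0
  | t1 :: l' => d (f t0) (f t1) + chain_sum d f t1 l'
  end.

Fixpoint chain_incr (t0 : R) (l : list R) : Prop :=
  match l with
  | nil => True
  | t1 :: l' => t0 <= t1 /\ chain_incr t1 l'
  end.

Definition curve_length {X : Type} (d : X -> X -> R) (f : R -> X) (s t : R) : Rbar :=
  Lub_Rbar (fun v => exists l : list R,
    chain_incr s l /\ last l s = t /\ v = chain_sum d f s l).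

Definition is_path {X : Type} (d : X -> X -> R) (p : path X) : Prop :=
  p_a p <= p_b p /\
  (forall t, p_a p <= t <= p_b p -> forall eps, 0 < eps -> exists eta, 0 < eta /\
     forall t', p_a p <= t' <= p_b p -> Rabs (t' - t) < eta -> d (p_f p t) (p_f p t') < eps) /\
  is_finite (curve_length d (p_f p) (p_a p) (p_b p)) /\
  (forall s t, p_a p <= s -> s <= t -> t <= p_b p ->
     curve_length d (p_f p) s t = Finite (t - s)).

Definition quasi_geodesic {X : Type} (d : X -> X -> R) (kappa lambda : R) (p : path X) : Prop :=
  forall t t', p_a p <= t <= p_b p -> p_a p <= t' <= p_b p ->
    d (p_f p t) (p_f p t') <= Rabs (t - t') /\
    Rabs (t - t') <= kappa * d (p_f p t) (p_f p t') + lambda.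

Definition joins {X : Type} (p : path X) (x y : X) : Prop :=
  p_f p (p_a p) = x /\ p_f p (p_b p) = y.

Definition path_system_space {X : Type} (d : X -> X -> R) (mu nu : R)
    (Gamma : path X -> Prop) : Prop :=
  is_metric d /\ is_geodesic d /\
  (forall p, Gamma p -> is_path d p) /\
  (forall p, Gamma p -> forall s t, p_a p <= s -> s <= t -> t <= p_b p ->
     Gamma (mkPath s t (p_f p))) /\
  (forall x y, exists p, Gamma p /\ joins p x y) /\
  (forall p, Gamma p -> quasi_geodesic d mu nu p).

Definition ball_X {X : Type} (d : X -> X -> R) (c : X) (r : R) : X -> Prop :=
  fun z => d c z < r.

Definition meets {X : Type} (p : path X) (S : X -> Prop) : Prop :=
  exists t, p_a p <= t <= p_b p /\ S (p_f p t).

Definition constricting {X : Type} (d : X -> X -> R) (Gamma : path X -> Prop)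
    (delta : R) (A : X -> Prop) (pi : X -> X) : Prop :=
  (forall x, A (pi x)) /\
  (forall x, A x -> d x (pi x) <= delta) /\
  (forall x y p, Gamma p -> joins p x y -> d (pi x) (pi y) > delta ->
     meets p (ball_X d (pi x) delta) /\ meets p (ball_X d (pi y) delta)).

Definition img {X : Type} (f : X -> X) (S : X -> Prop) : X -> Prop :=
  fun z => exists y, S y /\ z = f y.

(* Diameter (sup of distances; -oo for the empty set, never relevant here). *)
Definition diam {X : Type} (d : X -> X -> R) (S : X -> Prop) : Rbar :=
  Lub_Rbar (fun v => exists y z, S y /\ S z /\ v = d y z).

Definition setdist {X : Type} (d : X -> X -> R) (S T : X -> Prop) : Rbar :=
  Glb_Rbar (fun v => exists y z, S y /\ T z /\ v = d y z).

Definition singleton {X : Type} (x : X) : X -> Prop := fun z => z = x.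

(* diam_A(Y) = diam (pi_A(Y)) *)
Definition diam_proj {X : Type} (d : X -> X -> R) (pi : X -> X) (Y : X -> Prop) : Rbar :=
  diam d (img pi Y).

(* d_A(x, Y) = d(pi_A(x), pi_A(Y)) *)
Definition dproj_pt_set {X : Type} (d : X -> X -> R) (pi : X -> X) (x : X) (Y : X -> Prop) : Rbar :=
  setdist d (singleton (pi x)) (img pi Y).

(* Main.v *)
Require Import Defs.
From Stdlib Require Import Reals Lra.
From Coquelicot Require Import Coquelicot.
Open Scope R_scope.

Lemma lip {X : Type} (d : X -> X -> R) (mu nu : R) (Gamma : path X -> Prop)
  (delta : R) (A : X -> Prop) (pi : X -> X) :
  path_system_space d mu nu Gamma -> 0 <= delta ->
  constricting d Gamma delta A pi ->
  forall x y r, d x y <= r -> d (pi x) (pi y) <= 2*delta + Rabs mu * r + Rabs nu.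
Proof.
  intros [[Hpos [Hz [Hsym Htri]]] [_ [_ [_ [Hj Hq]]]]] Hd [_ [_ Hcs]] x y r Hr.
  destruct (Rle_dec (d (pi x) (pi y)) delta) as [Hle|Hgt].
  - assert (0 <= d x y) by apply Hpos.
    assert (0 <= Rabs mu * r) by (apply Rmult_le_pos; [apply Rabs_pos|lra]).
    pose proof (Rabs_pos nu). lra.
  - destruct (Hj x y) as [p [Hp Hjn]].
    destruct (Hcs x y p Hp Hjn) as [[t [Ht Hb1]] [t' [Ht' Hb2]]]; [lra|].
    unfold ball_X in *.
    destruct (Hq p Hp t t' Ht Ht') as [Hd1 _].
    destruct (Hq p Hp (p_a p) (p_b p)) as [_ Hd2]; [lra|lra|].
    destruct Hjn as [Ea Eb]. rewrite Ea, Eb in Hd2.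
    assert (Rabs (t - t') <= Rabs (p_a p - p_b p)).
    { rewrite (Rabs_left1 (p_a p - p_b p)) by lra.
      unfold Rabs; destruct (Rcase_abs (t-t')); lra. }
    assert (mu * d x y <= Rabs mu * r).
    { apply Rle_trans with (Rabs mu * d x y).
      - apply Rle_trans with (Rabs (mu * d x y)); [apply Rle_abs|].
        rewrite Rabs_mult, (Rabs_pos_eq (d x y)) by apply Hpos. lra.
      - apply Rmult_le_compat_l; [apply Rabs_pos|lra]. }
    pose proof (Rle_abs nu).
    pose proof (Htri (pi x) (p_f p t) (pi y)).
    pose proof (Htri (p_f p t) (p_f p t') (pi y)).
    rewrite (Hsym (p_f p t') (pi y)) in *. lra.
Qed.

Lemma c2 {X : Type} (d : X -> X -> R) (mu nu : R) (Gamma : path X -> Prop)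
  (delta : R) (B : X -> Prop) (pi : X -> X) :
  path_system_space d mu nu Gamma -> 0 <= delta ->
  constricting d Gamma delta B pi ->
  forall x p u, Gamma p -> joins p x (pi x) -> p_a p <= u <= p_b p ->
  d (pi (p_f p u)) (pi x) <=
    3*delta + Rabs mu * (Rabs mu * delta + Rabs nu) + Rabs nu.
Proof.
  intros HS Hd HC. pose proof (lip d mu nu Gamma delta B pi HS Hd HC) as L.
  destruct HS as [[Hpos [Hz [Hsym Htri]]] [_ [_ [Hsub [Hj Hq]]]]].
  destruct HC as [HinB [Hnear Hcs]].
  intros x p u Hp Hjn Hu.
  assert (0 <= Rabs mu * (Rabs mu * delta + Rabs nu)).
  { apply Rmult_le_pos; [apply Rabs_pos|].
    pose proof (Rabs_pos mu); pose proof (Rabs_pos nu); nra. }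
  pose proof (Rabs_pos nu).
  destruct (Rle_dec (d (pi x) (pi (p_f p u))) delta) as [Hle|Hgt].
  - rewrite (Hsym (pi (p_f p u)) (pi x)). lra.
  - set (q := mkPath (p_a p) u (p_f p)).
    assert (Hq' : Gamma q) by (apply Hsub; [exact Hp|lra..]).
    assert (Jq : joins q x (p_f p u)) by (split; simpl; [apply Hjn| reflexivity]).
    destruct (Hcs _ _ q Hq' Jq) as [[t [Ht Hb]] _]; [lra|].
    unfold ball_X in Hb; simpl in Ht, Hb.
    destruct (Hq p Hp t (p_b p)) as [_ H1]; [lra|lra|].
    destruct Hjn as [Ea Eb]. rewrite Eb in H1.
    destruct (Hq p Hp u (p_b p)) as [H2 _]; [lra|lra|]. rewrite Eb in H2.
    assert (mu * d (p_f p t) (pi x) <= Rabs mu * delta).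
    { apply Rle_trans with (Rabs mu * d (p_f p t) (pi x)).
      - apply Rle_trans with (Rabs (mu * d (p_f p t) (pi x))); [apply Rle_abs|].
        rewrite Rabs_mult, (Rabs_pos_eq (d _ _)) by apply Hpos. lra.
      - apply Rmult_le_compat_l; [apply Rabs_pos|]. rewrite Hsym; lra. }
    pose proof (Rle_abs nu).
    assert (Hr : d (p_f p u) (pi x) <= Rabs mu * delta + Rabs nu).
    { rewrite (Rabs_left1 (u - p_b p)) in H2 by lra.
      rewrite (Rabs_left1 (t - p_b p)) in H1 by lra. lra. }
    pose proof (L _ _ _ Hr).
    pose proof (Hnear (pi x) (HinB x)).
    pose proof (Htri (pi (p_f p u)) (pi (pi x)) (pi x)).
    rewrite (Hsym (pi (pi x)) (pi x)) in *. lra.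
Qed.

Lemma glb_ex {X : Type} (d : X -> X -> R) (S T : X -> Prop) e :
  Rbar_le (setdist d S T) (Finite e) -> exists y z, S y /\ T z /\ d y z <= e + 1.
Proof.
  intros H. apply Classical_Prop.NNPP; intros Hn.
  destruct (Glb_Rbar_correct (fun v => exists y z, S y /\ T z /\ v = d y z)) as [_ Hg].
  assert (Rbar_le (Finite (e+1)) (setdist d S T)).
  { apply Hg. intros v [y [z [Hy [Hz' ->]]]]. simpl.
    destruct (Rle_dec (d y z) (e+1)); [|lra].
    exfalso; apply Hn; exists y, z; auto. }
  pose proof (Rbar_le_trans _ _ _ H0 H). simpl in H1. lra.
Qed.

Lemma diam_le {X : Type} (d : X -> X -> R) (pi : X -> X) (S : X -> Prop) e :
  Rbar_le (diam_proj d pi S) (Finite e) -> forall y z, S y -> S z -> d (pi y) (pi z) <= e.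
Proof.
  intros H y z Hy Hz.
  destruct (Lub_Rbar_correct (fun v => exists y z, img pi S y /\ img pi S z /\ v = d y z)) as [Hu _].
  assert (Rbar_le (Finite (d (pi y) (pi z))) (diam_proj d pi S)).
  { apply Hu. exists (pi y), (pi z). split; [exists y; auto|split; [exists z; auto|auto]]. }
  pose proof (Rbar_le_trans _ _ _ H0 H). exact H1.
Qed.

Lemma proj_le {X : Type} (d : X -> X -> R) (pi : X -> X) x (Y : X -> Prop) y th :
  Y y -> d (pi x) (pi y) <= th -> Rbar_le (dproj_pt_set d pi x Y) (Finite th).
Proof.
  intros Hy H.
  destruct (Glb_Rbar_correct (fun v => exists a b, singleton (pi x) a /\ img pi Y b /\ v = d a b)) as [Hl _].
  apply Rbar_le_trans with (Finite (d (pi x) (pi y))); [|exact H].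
  apply Hl. exists (pi x), (pi y). repeat split. exists y; auto.
Qed.

Theorem mainTheorem8 (X : Type) (d : X -> X -> R) (mu nu : R)
    (Gamma : path X -> Prop) :
  path_system_space d mu nu Gamma ->
  forall delta eps : R, 0 <= delta -> 0 <= eps ->
  exists theta : R, 0 <= theta /\
    forall (A B : X -> Prop) (piA piB : X -> X) (Y : X -> Prop),
      constricting d Gamma delta A piA ->
      constricting d Gamma delta B piB ->
      (exists y, Y y) ->
      Rbar_le (diam_proj d piA B) (Finite eps) ->
      Rbar_le (diam_proj d piB A) (Finite eps) ->
      Rbar_le (diam_proj d piA Y) (Finite eps) ->
      Rbar_le (diam_proj d piB Y) (Finite eps) ->
      Rbar_le (setdist d A Y) (Finite eps) ->
      Rbar_le (setdist d B Y) (Finite eps) ->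
      forall x : X,
        Rbar_le (Rbar_min (dproj_pt_set d piA x Y) (dproj_pt_set d piB x Y)) (Finite theta).
Proof.
  intros HS delta eps Hd He.
  set (L := fun r => 2*delta + Rabs mu * r + Rabs nu).
  set (C2 := 3*delta + Rabs mu * (Rabs mu * delta + Rabs nu) + Rabs nu).
  assert (0 <= Rabs mu * (Rabs mu * delta + Rabs nu)).
  { apply Rmult_le_pos; [apply Rabs_pos|].
    pose proof (Rabs_pos mu); pose proof (Rabs_pos nu); nra. }
  assert (0 <= Rabs mu * (eps + 1)) by (apply Rmult_le_pos; [apply Rabs_pos|lra]).
  assert (0 <= Rabs mu * delta) by (apply Rmult_le_pos; [apply Rabs_pos|lra]).
  pose proof (Rabs_pos nu).
  exists (delta + C2 + L delta + eps + L (eps+1)).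
  split. { unfold L, C2. lra. }
  intros A B piA piB Y HA HB _ HAB HBA _ _ HAY HBY x.
  pose proof (lip d mu nu Gamma delta A piA HS Hd HA) as LA.
  pose proof (lip d mu nu Gamma delta B piB HS Hd HB) as LB.
  pose proof HS as [[Hpos [Hz [Hsym Htri]]] [_ [_ [Hsub [Hj Hq]]]]].
  destruct (glb_ex _ _ _ _ HAY) as [a' [ya [Ha' [Hya Hda]]]].
  destruct (glb_ex _ _ _ _ HBY) as [b' [yb [Hb' [Hyb Hdb]]]].
  pose proof HA as [HinA [HnA HcsA]]. pose proof HB as [HinB [HnB HcsB]].
  destruct (Rle_dec (d (piA x) (piA (piB x))) delta) as [Hle|Hgt].
  - apply Rbar_le_trans with (dproj_pt_set d piA x Y); [apply Rbar_min_l|].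
    apply proj_le with yb; auto.
    pose proof (diam_le _ _ _ _ HAB (piB x) b' (HinB x) Hb').
    pose proof (LA _ _ _ Hdb).
    pose proof (Htri (piA x) (piA (piB x)) (piA yb)).
    pose proof (Htri (piA (piB x)) (piA b') (piA yb)).
    unfold L, C2 in *. lra.
  - apply Rbar_le_trans with (dproj_pt_set d piB x Y); [apply Rbar_min_r|].
    apply proj_le with ya; auto.
    destruct (Hj x (piB x)) as [p [Hp Hjn]].
    destruct (HcsA x (piB x) p Hp Hjn) as [[t [Ht Hb]] _]; [lra|].
    unfold ball_X in Hb.
    pose proof (c2 d mu nu Gamma delta B piB HS Hd HB x p t Hp Hjn Ht).
    assert (d (p_f p t) (piA x) <= delta) by (rewrite Hsym; lra).
    pose proof (LB _ _ _ H4).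
    pose proof (diam_le _ _ _ _ HBA (piA x) a' (HinA x) Ha').
    pose proof (LB _ _ _ Hda).
    pose proof (Htri (piB x) (piB (p_f p t)) (piB (piA x))).
    pose proof (Htri (piB (piA x)) (piB a') (piB ya)).
    pose proof (Htri (piB x) (piB (piA x)) (piB ya)).
    rewrite (Hsym (piB x) (piB (p_f p t))) in *.
    unfold L, C2 in *. lra.
Qed.
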